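(* Fix one of the two variants $\sharp\in\{\text{lumped},\text{exact}\}$ described in the context. Let $\vec X^m\in\underline V^h_{\partial_0}$ satisfy assumption $(\mathfrak A)$, and let $\Delta t_m>0$. Then there exists a unique pair $(\delta\vec X^{m+1},\vec\kappa^{m+1})\in\underline V^h_\partial\times[W_\sharp]^2$ such that, with $\vec X^{m+1}=\vec X^m+\delta\vec X^{m+1}$, $$\Big(\vec X^m\cdot\vec e_1\,\tfrac{\vec X^{m+1}-\vec X^m}{\Delta t_m},\vec\chi\,|\vec X^m_\rho|\Big)_\sharp=\Big((\vec X^m\cdot\vec e_1)\vec\kappa^{m+1},\vec\chi\,|\vec X^m_\rho|\Big)_\sharp\quad\forall\,\vec\chi\in[W_\sharp]^2,$$ $$\Big((\vec X^m\cdot\vec e_1)\vec\kappa^{m+1},\vec\eta\,|\vec X^m_\rho|\Big)_\sharp+\big(\vec\eta\cdot\vec e_1,|\vec X^m_\rho|\big)+\Big((\vec X^m\cdot\vec e_1)\vec X^{m+1}_\rho,\vec\eta_\rho|\vec X^m_\rho|^{-1}\Big)=-\sum_{i=1}^2\sum_{p\in\partial_iI}\widehat\varrho^{(p)}(\vec X^m(p)\cdot\vec e_1)\,\vec\eta(p)\cdot\vec e_{3-i}\quad\forall\,\vec\eta\in\underline V^h_\partial .$$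
   Context: Setup. $\vec e_1=(1,0)^T$, $\vec e_2=(0,1)^T$; ''$\cdot$'' is the Euclidean inner product. $I$ is either the periodic interval $\mathbb R/\mathbb Z$ (with $\partial I=\emptyset$) or $I=(0,1)$ (with $\partial I=\{0,1\}$). $\partial I=\partial_DI\cup\partial_0I\cup\partial_1I\cup\partial_2I$ is a given disjoint partition, and $\widehat\varrho^{(p)}\in\mathbb R$, $p\in\{0,1\}$, are given constants with $|\widehat\varrho^{(p)}|\le1$. Let $J\ge3$, $h=1/J$, $q_j=jh$ ($j=0,\dots,J$; $q_0=q_J$ identified in the periodic case). $V^h$ is the space of continuous functions on $\overline I$ (periodic if $I=\mathbb R/\mathbb Z$) that are affine on each $[q_{j-1},q_j]$; $\underline V^h=[V^h]^2$; $\underline V^h_{\partial_0}=\{\vec\eta\in\underline V^h:\vec\eta(\rho)\cdot\vec e_1=0\ \forall\rho\in\partial_0I\}$; $\underline V^h_\partial=\{\vec\eta\in\underline V^h_{\partial_0}:\vec\eta(\rho)\cdot\vec e_i=0\ \forall\rho\in\partial_iI,\ i=1,2;\ \vec\eta(\rho)=\vec0\ \forall\rho\in\partial_DI\}$; $W^h_{\partial_0}=\{\chi\in V^h:\chi(\rho)=0\ \forall\rho\in\partial_0I\}$. $(\cdot,\cdot)$ is the $L^2(I)$ inner product (with dot product for vector functions), and for piecewise continuous $f,g$ the mass-lumped product is $(f,g)^h=\tfrac h2\sum_{j=1}^J[(fg)(q_j^-)+(fg)(q_{j-1}^+)]$. Two variants: in the ''lumped'' variant $(\cdot,\cdot)_\sharp=(\cdot,\cdot)^h$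 and $W_\sharp=W^h_{\partial_0}$; in the ''exact'' variant $(\cdot,\cdot)_\sharp=(\cdot,\cdot)$ and $W_\sharp=V^h$. Assumption $(\mathfrak A)$: $|\vec X^m_\rho|>0$ a.e. on $I$ and $\vec X^m(\rho)\cdot\vec e_1>0$ for all $\rho\in\overline I\setminus\partial_0I$. *)

(* Defs.v *)
From Stdlib Require Import Reals Lra Lia Classical ClassicalEpsilon.
Open Scope R_scope.

(* Riemann integral of f over [a,b] (0 if f is not Riemann integrable;
   all integrands below are piecewise polynomials, hence integrable). *)
Definition Rint (f : R -> R) (a b : R) : R :=
  match excluded_middle_informative (inhabited (Riemann_integrable f a b)) with
  | left H => RiemannInt (epsilon H (fun _ => True))
  | right _ => 0
  end.

Fixpoint sum1 (n : nat) (f : nat -> R) : R :=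
  match n with
  | O => 0
  | S k => sum1 k f + f (S k)
  end.

Definition vec := (R * R)%type.
Definition dot (a b : vec) : R := fst a * fst b + snd a * snd b.
Definition vnorm (a : vec) : R := sqrt (dot a a).
Definition vadd (a b : vec) : vec := (fst a + fst b, snd a + snd b).
Definition vsub (a b : vec) : vec := (fst a - fst b, snd a - snd b).
Definition vscale (c : R) (a : vec) : vec := (c * fst a, c * snd a).

(* Labels of the boundary partition  dI = d_D I u d_0 I u d_1 I u d_2 I *)
Inductive bclab := BD | B0 | B1 | B2.

(* A nodal function: its values at the nodes q_0,...,q_J
   (elements of V^h are determined by these values). *)
Definition nodal := nat -> R.
Definition vnodal := nat -> vec.
Definition c1 (V : vnodal) : nodal := fun j => fst (V j).
Definition c2 (V : vnodal) : nodal := fun j => snd (V j).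

Section FEM.
Variable J : nat.
(* periodic = true : I = R/Z ;  periodic = false : I = (0,1) *)
Variable periodic : bool.
(* label and rho-hat of the boundary points p = 0 (false) and p = 1 (true) *)
Variables lab0 lab1 : bclab.
Variables rho0 rho1 : R.

Definition h : R := / INR J.
Definition q (j : nat) : R := INR j * h.

(* restriction of the piecewise affine function with nodal values f to the
   element [q_{j-1}, q_j], j = 1..J, and its (constant) derivative there *)
Definition elt (f : nodal) (j : nat) (x : R) : R :=
  f (j - 1)%nat + (x - q (j - 1)) / h * (f j - f (j - 1)%nat).
Definition dlt (f : nodal) (j : nat) : R := (f j - f (j - 1)%nat) / h.
Definition velt (V : vnodal) (j : nat) (x : R) : vec :=
  (elt (c1 V) j x, elt (c2 V) j x).
Definition vdlt (V : vnodal) (j : nat) : vec := (dlt (c1 V) j, dlt (c2 V) j).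
Definition nrm (V : vnodal) (j : nat) : R := vnorm (vdlt V j).

(* Piecewise continuous functions are given element-wise: F j is the
   (continuous) restriction to [q_{j-1},q_j]. *)
Definition pint (F : nat -> R -> R) : R :=
  sum1 J (fun j => Rint (F j) (q (j - 1)) (q j)).
(* mass lumped integral: (f,g)^h = h/2 sum_j [(fg)(q_j^-) + (fg)(q_{j-1}^+)] *)
Definition lint (F : nat -> R -> R) : R :=
  h / 2 * sum1 J (fun j => F j (q j) + F j (q (j - 1))).
Definition ipS (lumped : bool) (F : nat -> R -> R) : R :=
  if lumped then lint F else pint F.

Definition labp (p : bool) : bclab := if p then lab1 else lab0.
Definition rhop (p : bool) : R := if p then rho1 else rho0.
Definition bnode (p : bool) : nat := if p then J else O.
Definition bpoint (p : bool) : R := if p then 1 else 0.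

(* membership in V^h (periodicity: q_J identified with q_0) *)
Definition inVh_s (f : nodal) : Prop := periodic = true -> f J = f O.
Definition inVh (V : vnodal) : Prop := periodic = true -> V J = V O.
Definition inV0 (V : vnodal) : Prop :=
  inVh V /\
  forall p : bool, periodic = false -> labp p = B0 -> fst (V (bnode p)) = 0.
Definition inVD (V : vnodal) : Prop :=
  inV0 V /\
  forall p : bool, periodic = false ->
    (labp p = B1 -> fst (V (bnode p)) = 0) /\
    (labp p = B2 -> snd (V (bnode p)) = 0) /\
    (labp p = BD -> V (bnode p) = (0, 0)).
Definition inW0 (f : nodal) : Prop :=
  inVh_s f /\ forall p : bool, periodic = false -> labp p = B0 -> f (bnode p) = 0.
Definition inWs (lumped : bool) (f : nodal) : Prop :=
  if lumped then inW0 f else inVh_s f.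
Definition inWs2 (lumped : bool) (V : vnodal) : Prop :=
  inWs lumped (c1 V) /\ inWs lumped (c2 V).

(* Assumption (A): |X_rho| > 0 a.e. (X_rho is constant on each element) and
   X(rho).e1 > 0 for all rho in closure(I) \ d_0 I. *)
Definition assumpA (X : vnodal) : Prop :=
  (forall j, (1 <= j <= J)%nat -> nrm X j > 0) /\
  (forall (j : nat) (x : R), (1 <= j <= J)%nat -> q (j - 1) <= x <= q j ->
     (forall p : bool, periodic = false -> labp p = B0 -> x <> bpoint p) ->
     elt (c1 X) j x > 0).

(* sum_{i=1}^2 sum_{p in d_i I} rho_p (X(p).e1) eta(p).e_{3-i} : contribution of p *)
Definition bterm (X eta : vnodal) (p : bool) : R :=
  if periodic then 0 else
  match labp p with
  | B1 => rhop p * fst (X (bnode p)) * snd (eta (bnode p))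
  | B2 => rhop p * fst (X (bnode p)) * fst (eta (bnode p))
  | _ => 0
  end.

Definition scheme (lumped : bool) (dt : R) (X dX K : vnodal) : Prop :=
  let Xn : vnodal := fun j => vadd (X j) (dX j) in
  inVD dX /\ inWs2 lumped K /\
  (forall chi : vnodal, inWs2 lumped chi ->
     ipS lumped (fun j x => elt (c1 X) j x *
        dot (vscale (/ dt) (vsub (velt Xn j x) (velt X j x))) (velt chi j x) * nrm X j)
     = ipS lumped (fun j x => elt (c1 X) j x * dot (velt K j x) (velt chi j x) * nrm X j)) /\
  (forall eta : vnodal, inVD eta ->
     ipS lumped (fun j x => elt (c1 X) j x * dot (velt K j x) (velt eta j x) * nrm X j)
     + pint (fun j x => elt (c1 eta) j x * nrm X j)
     + pint (fun j x => elt (c1 X) j x * dot (vdlt Xn j) (vdlt eta j) * / nrm X j)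
     = - (bterm X eta false + bterm X eta true)).

End FEM.

(* Main.v *)
From Stdlib Require Import Reals Lra Lia FunctionalExtensionality Classical ClassicalEpsilon List.
From Coquelicot Require Coquelicot.
Require Import Defs.
Open Scope R_scope.

Definition P3 (f : R -> R) := exists a b c d : R, forall x, f x = a + b*x + c*x^2 + d*x^3.

Module Simp.
Import Coquelicot.Coquelicot.

Lemma Rint_RInt f a b : ex_RInt f a b -> Rint f a b = RInt f a b.
Proof.
  intro H. unfold Rint. destruct (excluded_middle_informative _) as [H1|H1].
  - rewrite (RInt_Reals f a b (epsilon H1 (fun _ => True))). reflexivity.
  - exfalso. apply H1. constructor. now apply ex_RInt_Reals_0.
Qed.

Lemma simpson f a b : P3 f -> Rint f a b = (b - a)/6 * (f a + 4 * f ((a+b)/2) + f b).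
Proof.
  intros (c0 & c1 & c2 & c3 & Hf).
  assert (E : f = fun x => c0 + c1*x + c2*x^2 + c3*x^3) by (apply functional_extensionality; exact Hf).
  subst f.
  set (F := fun x => c0*x + c1*x^2/2 + c2*x^3/3 + c3*x^4/4).
  assert (HI : is_RInt (fun x => c0 + c1*x + c2*x^2 + c3*x^3) a b (minus (F b) (F a))).
  { apply (is_RInt_derive F). 
    - intros x _. unfold F. auto_derive; auto. simpl; field.
    - intros x _. apply continuity_pt_filterlim.
      apply derivable_continuous_pt. 
      apply derivable_pt_plus. apply derivable_pt_plus. apply derivable_pt_plus.
      apply derivable_pt_const. apply derivable_pt_scal; apply derivable_pt_id.
      apply derivable_pt_scal. apply derivable_pt_pow.
      apply derivable_pt_scal. apply derivable_pt_pow. }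
  rewrite Rint_RInt by (eexists; exact HI).
  rewrite (is_RInt_unique _ _ _ _ HI). unfold F, minus, plus, opp; simpl. field.
Qed.
End Simp.
Definition simpson := Simp.simpson.

Definition P0 (f : R -> R) := exists a : R, forall x, f x = a.
Definition P1 (f : R -> R) := exists a b : R, forall x, f x = a + b*x.
Definition P2 (f : R -> R) := exists a b c : R, forall x, f x = a + b*x + c*x^2.

Lemma P0_P1 f : P0 f -> P1 f.
Proof. intros [a H]. exists a, 0. intro x. rewrite H. ring. Qed.
Lemma P1_P2 f : P1 f -> P2 f.
Proof. intros (a&b&H). exists a, b, 0. intro x. rewrite H. ring. Qed.
Lemma P2_P3 f : P2 f -> P3 f.
Proof. intros (a&b&c&H). exists a, b, c, 0. intro x. rewrite H. ring. Qed.
Lemma P1_id : P1 (fun x => x).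
Proof. exists 0, 1. intro; ring. Qed.
Lemma P1_elt J f j : P1 (fun x => elt J f j x).
Proof. unfold elt. exists (f (j-1)%nat - q J (j-1) / h J * (f j - f (j-1)%nat)), (/h J * (f j - f (j-1)%nat)).
  intro x. unfold Rdiv. ring. Qed.

Lemma P1_add f g : P1 f -> P1 g -> P1 (fun x => f x + g x).
Proof. intros (a&b&H) (a'&b'&H'). exists (a+a'), (b+b'). intro x. rewrite H, H'. ring. Qed.
Lemma P2_add f g : P2 f -> P2 g -> P2 (fun x => f x + g x).
Proof. intros (a&b&c&H) (a'&b'&c'&H'). exists (a+a'), (b+b'), (c+c'). intro x. rewrite H, H'. ring. Qed.
Lemma P3_add f g : P3 f -> P3 g -> P3 (fun x => f x + g x).
Proof. intros (a&b&c&d&H) (a'&b'&c'&d'&H'). exists (a+a'), (b+b'), (c+c'), (d+d'). intro x. rewrite H, H'. ring. Qed.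
Lemma P1_sub f g : P1 f -> P1 g -> P1 (fun x => f x - g x).
Proof. intros (a&b&H) (a'&b'&H'). exists (a-a'), (b-b'). intro x. rewrite H, H'. ring. Qed.
Lemma P2_sub f g : P2 f -> P2 g -> P2 (fun x => f x - g x).
Proof. intros (a&b&c&H) (a'&b'&c'&H'). exists (a-a'), (b-b'), (c-c'). intro x. rewrite H, H'. ring. Qed.
Lemma P3_sub f g : P3 f -> P3 g -> P3 (fun x => f x - g x).
Proof. intros (a&b&c&d&H) (a'&b'&c'&d'&H'). exists (a-a'), (b-b'), (c-c'), (d-d'). intro x. rewrite H, H'. ring. Qed.
Lemma P1_mul0l f g : P0 f -> P1 g -> P1 (fun x => f x * g x).
Proof. intros (k&H) (a&b&H'). exists (k*a), (k*b). intro x. rewrite H, H'. ring. Qed.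
Lemma P2_mul0l f g : P0 f -> P2 g -> P2 (fun x => f x * g x).
Proof. intros (k&H) (a&b&c&H'). exists (k*a), (k*b), (k*c). intro x. rewrite H, H'. ring. Qed.
Lemma P3_mul0l f g : P0 f -> P3 g -> P3 (fun x => f x * g x).
Proof. intros (k&H) (a&b&c&d&H'). exists (k*a), (k*b), (k*c), (k*d). intro x. rewrite H, H'. ring. Qed.
Lemma P1_mul0r f g : P1 f -> P0 g -> P1 (fun x => f x * g x).
Proof. intros (a&b&H') (k&H). exists (k*a), (k*b). intro x. rewrite H, H'. ring. Qed.
Lemma P2_mul0r f g : P2 f -> P0 g -> P2 (fun x => f x * g x).
Proof. intros (a&b&c&H') (k&H). exists (k*a), (k*b), (k*c). intro x. rewrite H, H'. ring. Qed.
Lemma P3_mul0r f g : P3 f -> P0 g -> P3 (fun x => f x * g x).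
Proof. intros (a&b&c&d&H') (k&H). exists (k*a), (k*b), (k*c), (k*d). intro x. rewrite H, H'. ring. Qed.
Lemma P2_mul11 f g : P1 f -> P1 g -> P2 (fun x => f x * g x).
Proof. intros (a&b&H) (a'&b'&H'). exists (a*a'), (a*b'+b*a'), (b*b'). intro x. rewrite H, H'. ring. Qed.
Lemma P3_mul12 f g : P1 f -> P2 g -> P3 (fun x => f x * g x).
Proof. intros (a&b&H) (a'&b'&c'&H'). exists (a*a'), (a*b'+b*a'), (a*c'+b*b'), (b*c'). intro x. rewrite H, H'. ring. Qed.
Lemma P3_mul21 f g : P2 f -> P1 g -> P3 (fun x => f x * g x).
Proof. intros (a'&b'&c'&H') (a&b&H). exists (a*a'), (a*b'+b*a'), (a*c'+b*b'), (b*c'). intro x. rewrite H, H'. ring. Qed.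

Ltac pd := match goal with
 | |- P0 _ => eexists; intro; reflexivity
 | |- P1 _ => first [ apply P1_elt | apply P1_id | solve [apply P0_P1; pd]
     | solve [apply P1_add; pd] | solve [apply P1_sub; pd]
     | solve [apply P1_mul0l; pd] | solve [apply P1_mul0r; pd] ]
 | |- P2 _ => first [ solve [apply P1_P2; pd]
     | solve [apply P2_add; pd] | solve [apply P2_sub; pd]
     | solve [apply P2_mul11; pd]
     | solve [apply P2_mul0l; pd] | solve [apply P2_mul0r; pd] ]
 | |- P3 _ => first [ solve [apply P2_P3; pd]
     | solve [apply P3_add; pd] | solve [apply P3_sub; pd]
     | solve [apply P3_mul12; pd] | solve [apply P3_mul21; pd]
     | solve [apply P3_mul0l; pd] | solve [apply P3_mul0r; pd] ]
 end.


Definition vnadd (u w : vnodal) : vnodal := fun k => vadd (u k) (w k).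
Definition vnscale (c : R) (u : vnodal) : vnodal := fun k => vscale c (u k).
Definition vnzero : vnodal := fun _ => (0, 0).

Fixpoint comb (l : list vnodal) (c : nat -> R) : vnodal :=
  match l with
  | nil => vnzero
  | e :: l' => vnadd (vnscale (c O) e) (comb l' (fun i => c (S i)))
  end.

Lemma vnzero_sc : vnzero = vnscale 0 vnzero.
Proof. apply functional_extensionality; intro k. unfold vnzero, vnscale, vscale; simpl. f_equal; ring. Qed.

Section LMsec.
Variable B : vnodal -> vnodal -> R.
Variable null : vnodal -> Prop.
Hypothesis B1a : forall u w v, B (vnadd u w) v = B u v + B w v.
Hypothesis B1s : forall c u v, B (vnscale c u) v = c * B u v.
Hypothesis B2a : forall u w v, B u (vnadd w v) = B u w + B u v.
Hypothesis B2s : forall c u v, B u (vnscale c v) = c * B u v.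
Hypothesis Bn : forall u v, null v -> B u v = 0.
Hypothesis Bc : forall v, B v v = 0 -> null v.

Lemma B1z v : B vnzero v = 0.
Proof. rewrite vnzero_sc, B1s. ring. Qed.
Lemma B2z u : B u vnzero = 0.
Proof. rewrite vnzero_sc, B2s. ring. Qed.

Lemma comb_ext2 (L : vnodal -> R) (u : vnodal) :
  (forall u w, L (vnadd u w) = L u + L w) -> (forall c u, L (vnscale c u) = c * L u) ->
  forall l, (forall v, In v l -> B u v = L v) -> forall c, B u (comb l c) = L (comb l c).
Proof.
  intros La Ls l. induction l as [|e l IH]; intros H c; simpl.
  - rewrite B2z, vnzero_sc, Ls. ring.
  - rewrite B2a, B2s, La, Ls, IH by (intros; apply H; simpl; auto).
    rewrite H by (simpl; auto). ring.
Qed.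

Lemma comb_lin1 l : forall a b s v,
  B (comb l (fun i => a i + s * b i)) v = B (comb l a) v + s * B (comb l b) v.
Proof.
  induction l as [|e l IH]; intros a b s v; simpl.
  - rewrite !B1z. ring.
  - rewrite !B1a, !B1s. rewrite (IH (fun i => a (S i)) (fun i => b (S i))). ring.
Qed.

Lemma LM : forall l (L : vnodal -> R),
  (forall u w, L (vnadd u w) = L u + L w) -> (forall c u, L (vnscale c u) = c * L u) ->
  (forall v, null v -> L v = 0) ->
  exists c, forall v, In v l -> B (comb l c) v = L v.
Proof.
  induction l as [|e l IH]; intros L La Ls Ln.
  - exists (fun _ => 0). intros v [].
  - destruct (IH L La Ls Ln) as [c1 Hc1].
    destruct (IH (fun v => B e v)) as [d Hd].
    { intros; apply B2a. } { intros; apply B2s. } { intros; now apply Bn. }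
    set (u1 := comb l c1) in *. set (w := comb l d) in *.
    set (z := vnadd e (vnscale (-1) w)).
    assert (Hz : forall v, B z v = B e v - B w v).
    { intro v. unfold z. rewrite B1a, B1s. ring. }
    assert (Hzl : forall v, In v l -> B z v = 0).
    { intros v Hv. rewrite Hz, Hd by exact Hv. ring. }
    assert (Hzw : B z w = 0).
    { unfold w. apply (comb_ext2 (fun _ => 0)); auto; intros; ring. }
    assert (Hzz : B z z = B z e).
    { unfold z at 2. rewrite B2a, B2s, Hzw. ring. }
    assert (Hu1w : B u1 w = L w).
    { unfold w, u1. apply comb_ext2; auto. }
    destruct (Req_dec (B z z) 0) as [H0|H0].
    + pose proof (Bc _ H0) as Hnz.
      exists (fun i => match i with O => 0 | S i => c1 i end).
      intros v Hv. simpl. rewrite B1a, B1s. change (comb l (fun i => c1 i)) with u1.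
      destruct Hv as [<-|Hv].
      * assert (E1 : B u1 z = 0) by (apply Bn; exact Hnz).
        assert (E2 : L z = 0) by (apply Ln; exact Hnz).
        unfold z in E1, E2. rewrite B2a, B2s in E1. rewrite La, Ls in E2. lra.
      * rewrite Hc1 by exact Hv. ring.
    + set (t := (L e - B u1 e) / B z z).
      exists (fun i => match i with O => t | S i => c1 i + (-t) * d i end).
      intros v Hv. simpl. rewrite B1a, B1s.
      rewrite (comb_lin1 l c1 d (-t)). fold u1 w.
      destruct Hv as [<-|Hv].
      * assert (B e e - B w e = B z z) by (rewrite Hzz, Hz; ring).
        transitivity (B u1 e + t * (B e e - B w e)); [ring|]. rewrite H. unfold t. field. exact H0.
      * rewrite Hc1, Hd by exact Hv. ring.
Qed.
End LMsec.

Lemma sum1_ext n f g : (forall j, (1 <= j <= n)%nat -> f j = g j) -> sum1 n f = sum1 n g.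
Proof. induction n; intro H; simpl; auto. rewrite IHn by (intros; apply H; lia). rewrite H by lia. auto. Qed.
Lemma sum1_add n f g : sum1 n (fun j => f j + g j) = sum1 n f + sum1 n g.
Proof. induction n; simpl; [ring|]. rewrite IHn. ring. Qed.
Lemma sum1_scal n c f : sum1 n (fun j => c * f j) = c * sum1 n f.
Proof. induction n; simpl; [ring|]. rewrite IHn. ring. Qed.
Lemma sum1_nonneg n f : (forall j, (1 <= j <= n)%nat -> 0 <= f j) -> 0 <= sum1 n f.
Proof. induction n; intro H; simpl; [lra|]. pose proof (H (S n) ltac:(lia)). pose proof (IHn ltac:(intros; apply H; lia)). lra. Qed.
Lemma sum1_zero n f : (forall j, (1 <= j <= n)%nat -> 0 <= f j) -> sum1 n f = 0 ->
  forall j, (1 <= j <= n)%nat -> f j = 0.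
Proof.
  induction n; intros H H0 j Hj; [lia|]. simpl in H0.
  pose proof (H (S n) ltac:(lia)). pose proof (sum1_nonneg n f ltac:(intros; apply H; lia)).
  destruct (Nat.eq_dec j (S n)) as [->|Hne]; [lra|].
  apply IHn; try lia; [intros; apply H; lia|lra].
Qed.

Section Geo.
Variable J : nat.
Hypothesis HJ : (1 <= J)%nat.

Lemma INRJ_pos : 0 < INR J.
Proof. apply lt_0_INR. lia. Qed.
Lemma h_pos : 0 < h J.
Proof. unfold h. apply Rinv_0_lt_compat, INRJ_pos. Qed.
Lemma q_step j : (1 <= j)%nat -> q J j - q J (j-1) = h J.
Proof. intro Hj. unfold q. destruct j; [lia|]. replace (S j - 1)%nat with j by lia. rewrite S_INR. ring. Qed.
Lemma q_ge0 k : 0 <= q J k.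
Proof. unfold q. pose proof (pos_INR k). pose proof h_pos. nra. Qed.
Lemma q_le1 k : (k <= J)%nat -> q J k <= 1.
Proof. intro Hk. unfold q, h. apply le_INR in Hk. pose proof INRJ_pos.
  apply (Rmult_le_reg_r (INR J)); auto. rewrite Rmult_assoc, Rinv_l by lra. lra. Qed.
Lemma q0 : q J 0 = 0.
Proof. unfold q. simpl. ring. Qed.
Lemma qJ : q J J = 1.
Proof. unfold q, h. pose proof INRJ_pos. field. lra. Qed.
Lemma q_inj k k' : q J k = q J k' -> k = k'.
Proof. unfold q. intro E. pose proof h_pos. apply Rmult_eq_reg_r in E; [|lra]. now apply INR_eq. Qed.

Definition mid j := (q J (j-1) + q J j) / 2.

Lemma elt_a f j : elt J f j (q J (j-1)) = f (j-1)%nat.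
Proof. unfold elt. unfold Rdiv. ring. Qed.
Lemma elt_b f j : (1 <= j)%nat -> elt J f j (q J j) = f j.
Proof. intro Hj. unfold elt. rewrite q_step by auto. pose proof h_pos. field. lra. Qed.
Lemma elt_m f j : (1 <= j)%nat -> elt J f j (mid j) = (f (j-1)%nat + f j) / 2.
Proof. intro Hj. unfold elt, mid. replace ((q J (j - 1) + q J j) / 2 - q J (j - 1)) with ((q J j - q J (j-1))/2) by field.
  rewrite q_step by auto. pose proof h_pos. field. lra. Qed.

Lemma pint_simp F : (forall j, P3 (F j)) ->
  pint J F = sum1 J (fun j => h J / 6 * (F j (q J (j-1)) + 4 * F j (mid j) + F j (q J j))).
Proof.
  intro HP. unfold pint. apply sum1_ext. intros j Hj. rewrite simpson by auto.
  rewrite q_step by lia. unfold mid. reflexivity.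
Qed.

Lemma pint_ext F G : (forall j, (1 <= j <= J)%nat -> forall x, F j x = G j x) -> pint J F = pint J G.
Proof. intro H. unfold pint. apply sum1_ext. intros j Hj. f_equal. apply functional_extensionality. auto. Qed.
Lemma lint_ext F G : (forall j, (1 <= j <= J)%nat -> F j (q J j) = G j (q J j) /\ F j (q J (j-1)) = G j (q J (j-1))) -> lint J F = lint J G.
Proof. intro H. unfold lint. f_equal. apply sum1_ext. intros j Hj. destruct (H j Hj) as [-> ->]. auto. Qed.

Lemma pint_lin F G1 G2 a b : (forall j, P3 (G1 j)) -> (forall j, P3 (G2 j)) -> 
  (forall j x, F j x = a * G1 j x + b * G2 j x) -> pint J F = a * pint J G1 + b * pint J G2.
Proof.
  intros P1 P2 E.
  assert (F = fun j x => a * G1 j x + b * G2 j x) by (do 2 (apply functional_extensionality; intro); auto). subst F.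
  rewrite !pint_simp; auto.
  - rewrite <- !sum1_scal, <- sum1_add. apply sum1_ext. intros; ring.
  - intro j. apply P3_add; apply P3_mul0l; auto; eexists; intro; reflexivity.
Qed.
Lemma lint_lin F G1 G2 a b : 
  (forall j x, F j x = a * G1 j x + b * G2 j x) -> lint J F = a * lint J G1 + b * lint J G2.
Proof.
  intros E. unfold lint. rewrite <- !Rmult_assoc, (Rmult_comm a), (Rmult_comm b), !Rmult_assoc.
  rewrite <- !Rmult_plus_distr_l. f_equal. rewrite <- !sum1_scal, <- sum1_add. apply sum1_ext. intros; rewrite !E; ring.
Qed.
Lemma ipS_lin l F G1 G2 a b : (forall j, P3 (G1 j)) -> (forall j, P3 (G2 j)) -> 
  (forall j x, F j x = a * G1 j x + b * G2 j x) -> ipS J l F = a * ipS J l G1 + b * ipS J l G2.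
Proof. destruct l; simpl; intros. now apply lint_lin. now apply pint_lin. Qed.

Lemma pint_zero F : (forall j, (1 <= j <= J)%nat -> forall x, F j x = 0) -> pint J F = 0.
Proof.
  intro H. rewrite (pint_ext F (fun _ _ => 0)) by auto. rewrite pint_simp.
  - rewrite (sum1_ext _ _ (fun j => 0 * 0)); [rewrite sum1_scal; ring | intros; ring].
  - intro; exists 0, 0, 0, 0; intro; ring.
Qed.
Lemma lint_zero F : (forall j, (1 <= j <= J)%nat -> forall x, F j x = 0) -> lint J F = 0.
Proof.
  intro H. unfold lint. rewrite (sum1_ext _ _ (fun j => 0 * 0)). rewrite sum1_scal. ring.
  intros j Hj. rewrite !H by auto. ring.
Qed.

Lemma pint_nonneg F : (forall j, P3 (F j)) ->
  (forall j, (1 <= j <= J)%nat -> 0 <= F j (q J (j-1)) /\ 0 <= F j (mid j) /\ 0 <= F j (q J j)) ->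
  0 <= pint J F.
Proof.
  intros P H. rewrite pint_simp by auto. apply sum1_nonneg. intros j Hj. destruct (H j Hj) as (?&?&?).
  pose proof h_pos. apply Rmult_le_pos; lra.
Qed.
Lemma pint_zero_pts F : (forall j, P3 (F j)) ->
  (forall j, (1 <= j <= J)%nat -> 0 <= F j (q J (j-1)) /\ 0 <= F j (mid j) /\ 0 <= F j (q J j)) ->
  pint J F = 0 ->
  forall j, (1 <= j <= J)%nat -> F j (q J (j-1)) = 0 /\ F j (mid j) = 0 /\ F j (q J j) = 0.
Proof.
  intros P H H0. rewrite pint_simp in H0 by auto. intros j Hj.
  assert (E : forall i, (1 <= i <= J)%nat -> h J / 6 * (F i (q J (i-1)) + 4 * F i (mid i) + F i (q J i)) = 0).
  { apply sum1_zero; auto. intros i Hi; destruct (H i Hi) as (?&?&?); pose proof h_pos; apply Rmult_le_pos; lra. }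
  specialize (E j Hj).
  destruct (H j Hj) as (?&?&?). pose proof h_pos.
  apply Rmult_integral in E. destruct E as [E|E]; [lra|]. lra.
Qed.
Lemma lint_nonneg F :
  (forall j, (1 <= j <= J)%nat -> 0 <= F j (q J (j-1)) /\ 0 <= F j (q J j)) -> 0 <= lint J F.
Proof.
  intros H. unfold lint. apply Rmult_le_pos. pose proof h_pos; lra. apply sum1_nonneg. intros j Hj. destruct (H j Hj). lra.
Qed.
Lemma lint_zero_pts F :
  (forall j, (1 <= j <= J)%nat -> 0 <= F j (q J (j-1)) /\ 0 <= F j (q J j)) -> lint J F = 0 ->
  forall j, (1 <= j <= J)%nat -> F j (q J (j-1)) = 0 /\ F j (q J j) = 0.
Proof.
  intros H H0 j Hj. unfold lint in H0. apply Rmult_integral in H0. destruct H0 as [E|E]; [pose proof h_pos; lra|].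
  assert (E2 : forall i, (1 <= i <= J)%nat -> F i (q J i) + F i (q J (i-1)) = 0).
  { apply sum1_zero; auto. intros i Hi; destruct (H i Hi); lra. }
  specialize (E2 j Hj).
  destruct (H j Hj). lra.
Qed.
End Geo.

Lemma vec_eq (a b : vec) : fst a = fst b -> snd a = snd b -> a = b.
Proof. destruct a, b; simpl; intros -> ->; auto. Qed.

Lemma velt_add J u w j x : velt J (vnadd u w) j x = vadd (velt J u j x) (velt J w j x).
Proof. unfold velt, vadd, vnadd, elt, c1, c2; simpl. apply vec_eq; simpl; unfold Rdiv; ring. Qed.
Lemma velt_sc J c u j x : velt J (vnscale c u) j x = vscale c (velt J u j x).
Proof. unfold velt, vscale, vnscale, elt, c1, c2; simpl. apply vec_eq; simpl; unfold Rdiv; ring. Qed.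
Lemma vdlt_add J u w j : vdlt J (vnadd u w) j = vadd (vdlt J u j) (vdlt J w j).
Proof. unfold vdlt, vadd, vnadd, dlt, c1, c2; simpl. apply vec_eq; simpl; unfold Rdiv; ring. Qed.
Lemma vdlt_sc J c u j : vdlt J (vnscale c u) j = vscale c (vdlt J u j).
Proof. unfold vdlt, vscale, vnscale, dlt, c1, c2; simpl. apply vec_eq; simpl; unfold Rdiv; ring. Qed.
Lemma dot_addl a b c : dot (vadd a b) c = dot a c + dot b c.
Proof. unfold dot, vadd; simpl; ring. Qed.
Lemma dot_addr a b c : dot c (vadd a b) = dot c a + dot c b.
Proof. unfold dot, vadd; simpl; ring. Qed.
Lemma dot_scl k a c : dot (vscale k a) c = k * dot a c.
Proof. unfold dot, vscale; simpl; ring. Qed.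
Lemma dot_scr k a c : dot c (vscale k a) = k * dot c a.
Proof. unfold dot, vscale; simpl; ring. Qed.
Lemma dot_nn a : 0 <= dot a a.
Proof. unfold dot. nra. Qed.
Lemma dot_z a : dot a a = 0 -> a = (0,0).
Proof. unfold dot. destruct a as [a b]; simpl. intro. apply vec_eq; simpl; nra. Qed.
Lemma dot_0r a : dot a (0,0) = 0.
Proof. unfold dot; simpl; ring. Qed.

Lemma velt_a J V j : velt J V j (q J (j-1)) = V (j-1)%nat.
Proof. unfold velt. rewrite !elt_a. unfold c1, c2. destruct (V (j-1)%nat); auto. Qed.
Lemma velt_b J V j : (1 <= J)%nat -> (1 <= j)%nat -> velt J V j (q J j) = V j.
Proof. intros. unfold velt. rewrite !elt_b by auto. unfold c1, c2. destruct (V j); auto. Qed.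
Lemma velt_m J V j : (1 <= J)%nat -> (1 <= j)%nat ->
  velt J V j (mid J j) = vscale (/2) (vadd (V (j-1)%nat) (V j)).
Proof. intros. unfold velt. rewrite !elt_m by auto. unfold c1, c2, vscale, vadd; simpl. apply vec_eq; simpl; field. Qed.
Lemma velt_ext J U V j x : U (j-1)%nat = V (j-1)%nat -> U j = V j -> velt J U j x = velt J V j x.
Proof. intros E1 E2. unfold velt, elt, c1, c2. rewrite E1, E2. auto. Qed.
Lemma vdlt_ext J U V j : U (j-1)%nat = V (j-1)%nat -> U j = V j -> vdlt J U j = vdlt J V j.
Proof. intros E1 E2. unfold vdlt, dlt, c1, c2. rewrite E1, E2. auto. Qed.
Lemma elt_ext J U V j x : U (j-1)%nat = V (j-1)%nat -> U j = V j -> elt J U j x = elt J V j x.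
Proof. intros E1 E2. unfold elt. rewrite E1, E2. auto. Qed.

Lemma ipS_ext J l F G : (1 <= J)%nat -> (forall j, (1 <= j <= J)%nat -> forall x, F j x = G j x) -> ipS J l F = ipS J l G.
Proof. intros HJ H. destruct l; simpl. apply lint_ext. intros j Hj; split; apply H; auto. apply pint_ext; auto. Qed.
Local Open Scope bool_scope.

Definition isB0 (l : bclab) : bool := match l with B0 => true | _ => false end.
Lemma isB0_iff l : isB0 l = true <-> l = B0.
Proof. destruct l; simpl; split; congruence. Qed.

Section Main.
Variables (J : nat) (periodic : bool) (lab0 lab1 : bclab) (rho0 rho1 : R) (lumped : bool) (X : vnodal) (dt : R).
Hypothesis HJ : (3 <= J)%nat.
Hypothesis HX0 : inV0 J periodic lab0 lab1 X.
Hypothesis HA : assumpA J periodic lab0 lab1 X.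
Hypothesis Hdt : 0 < dt.

Let HJ1 : (1 <= J)%nat. Proof. lia. Qed.

Definition msk (k : nat) : bool :=
  negb periodic && ((Nat.eqb k 0 && isB0 lab0) || (Nat.eqb k J && isB0 lab1)).

Lemma msk_spec k : msk k = true ->
  periodic = false /\ exists p, k = bnode J p /\ labp lab0 lab1 p = B0.
Proof.
  unfold msk. intro H. apply andb_prop in H. destruct H as [H1 H2]. destruct periodic; [discriminate|].
  split; auto. apply Bool.orb_prop in H2. destruct H2 as [H|H]; apply andb_prop in H; destruct H as [H3 H4];
  apply Nat.eqb_eq in H3; apply isB0_iff in H4.
  - exists false. simpl. auto.
  - exists true. simpl. auto.
Qed.
Lemma msk_bnode p : periodic = false -> labp lab0 lab1 p = B0 -> msk (bnode J p) = true.
Proof.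
  intros Hp Hl. unfold msk. rewrite Hp. destruct p; simpl in *; rewrite Hl; simpl;
  rewrite ?Nat.eqb_refl; simpl; rewrite ?Bool.orb_true_r; auto.
Qed.
Lemma msk_per k : periodic = true -> msk k = false.
Proof. intro H. unfold msk. rewrite H. auto. Qed.
Lemma msk_1 : msk 1 = false.
Proof. unfold msk. replace (1 =? J)%nat with false by (symmetry; apply Nat.eqb_neq; lia). simpl. rewrite Bool.andb_false_r. auto. Qed.
Lemma msk_adj j : (1 <= j <= J)%nat -> msk (j-1) = false \/ msk j = false.
Proof.
  intro Hj. destruct (msk (j-1)) eqn:E1; auto. destruct (msk j) eqn:E2; auto.
  apply msk_spec in E1. apply msk_spec in E2. destruct E1 as [_ [p1 [H1 _]]]. destruct E2 as [_ [p2 [H2 _]]].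
  destruct p1, p2; simpl in *; lia.
Qed.

Lemma nrm_pos j : (1 <= j <= J)%nat -> 0 < nrm J X j.
Proof. intro Hj. destruct HA as [H _]. apply H. auto. Qed.

Lemma notb k : (k <= J)%nat -> msk k = false -> forall p, periodic = false -> labp lab0 lab1 p = B0 -> q J k <> bpoint p.
Proof.
  intros Hk Hm p Hp Hl Eq. pose proof (msk_bnode p Hp Hl) as Hb. rename Eq into E.
  destruct p; simpl in E.
  - rewrite <- (qJ J) in E by lia. apply q_inj in E; [|lia]. subst. simpl in Hb. congruence.
  - rewrite <- (q0 J) in E. apply q_inj in E; [|lia]. subst. simpl in Hb. congruence.
Qed.

Lemma xnode_pos k : (k <= J)%nat -> msk k = false -> 0 < fst (X k).
Proof.
  intros Hk Hm. destruct HA as [_ H].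
  destruct k as [|k].
  - assert (E : elt J (c1 X) 1 (q J 0) = fst (X 0%nat)) by exact (elt_a J (c1 X) 1).
    rewrite <- E. apply H. lia.
    pose proof (q_step J ltac:(lia) 1 ltac:(lia)). pose proof (h_pos J ltac:(lia)). simpl in *. lra.
    apply notb; auto.
  - specialize (H (S k) (q J (S k))). rewrite elt_b in H by lia. apply H. lia.
    pose proof (q_step J ltac:(lia) (S k) ltac:(lia)). pose proof (h_pos J ltac:(lia)). lra.
    apply notb; auto.
Qed.
Lemma xnode_msk k : msk k = true -> fst (X k) = 0.
Proof.
  intro H. apply msk_spec in H. destruct H as [Hp [p [-> Hl]]]. destruct HX0 as [_ H]. apply H; auto.
Qed.
Lemma xnode_nn k : (k <= J)%nat -> 0 <= fst (X k).
Proof. intro Hk. destruct (msk k) eqn:E. rewrite xnode_msk; auto; lra. left; apply xnode_pos; auto. Qed.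
Lemma xmid_pos j : (1 <= j <= J)%nat -> 0 < elt J (c1 X) j (mid J j).
Proof.
  intros Hj. destruct HA as [_ H]. apply H; auto.
  - pose proof (q_step J ltac:(lia) j ltac:(lia)). pose proof (h_pos J ltac:(lia)). unfold mid. lra.
  - intros p _ _ E. pose proof (q_step J ltac:(lia) j ltac:(lia)). pose proof (h_pos J ltac:(lia)).
    pose proof (q_ge0 J ltac:(lia) (j-1)). pose proof (q_le1 J ltac:(lia) j ltac:(lia)). unfold mid in E.
    destruct p; simpl in E; lra.
Qed.
Lemma x1a_nn j : (1 <= j <= J)%nat -> 0 <= elt J (c1 X) j (q J (j-1)).
Proof. intro. rewrite elt_a. apply xnode_nn. lia. Qed.
Lemma x1b_nn j : (1 <= j <= J)%nat -> 0 <= elt J (c1 X) j (q J j).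
Proof. intro. rewrite elt_b by lia. apply xnode_nn. lia. Qed.


Definition Kf (u : vnodal) : vnodal := fun k => if lumped && msk k then (0,0) else vscale (/dt) (u k).
Lemma Kf_add u w : Kf (vnadd u w) = vnadd (Kf u) (Kf w).
Proof. apply functional_extensionality; intro k. unfold Kf, vnadd. destruct (lumped && msk k);
  unfold vadd, vscale; simpl; apply vec_eq; simpl; ring. Qed.
Lemma Kf_sc c u : Kf (vnscale c u) = vnscale c (Kf u).
Proof. apply functional_extensionality; intro k. unfold Kf, vnscale. destruct (lumped && msk k);
  unfold vscale; simpl; apply vec_eq; simpl; ring. Qed.
Lemma Kf_exact u : lumped = false -> Kf u = vnscale (/dt) u.
Proof. intro H. unfold Kf, vnscale. rewrite H. auto. Qed.
Lemma Kf_nn u k : 0 <= dot (Kf u k) (u k).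
Proof. unfold Kf. destruct (lumped && msk k). unfold dot; simpl; lra.
  rewrite dot_scl. apply Rmult_le_pos. left; apply Rinv_0_lt_compat; auto. apply dot_nn. Qed.

Definition Fa u v j x := elt J (c1 X) j x * dot (velt J (Kf u) j x) (velt J v j x) * nrm J X j.
Definition Fb u v j x := elt J (c1 X) j x * dot (vdlt J u j) (vdlt J v j) * / nrm J X j.
Definition Bf u v := ipS J lumped (Fa u v) + pint J (Fb u v).
Definition bt v := bterm J periodic lab0 lab1 rho0 rho1 X v false + bterm J periodic lab0 lab1 rho0 rho1 X v true.
Definition Fc v j x := elt J (c1 v) j x * nrm J X j.
Definition Lf v := - bt v - pint J (Fc v) - pint J (Fb X v).

Lemma Fa_P3 u v j : P3 (Fa u v j).
Proof. unfold Fa, dot, velt. simpl. pd. Qed.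
Lemma Fb_P3 u v j : P3 (Fb u v j).
Proof. unfold Fb. pd. Qed.
Lemma Fc_P3 v j : P3 (Fc v j).
Proof. unfold Fc. pd. Qed.

Lemma Bf_add1 u w v : Bf (vnadd u w) v = Bf u v + Bf w v.
Proof.
  unfold Bf. rewrite (ipS_lin J HJ1 lumped _ (Fa u v) (Fa w v) 1 1), (pint_lin J HJ1 (Fb (vnadd u w) v) (Fb u v) (Fb w v) 1 1);
  try (intros; apply Fa_P3); try (intros; apply Fb_P3).
  ring. intros; unfold Fb; rewrite vdlt_add, dot_addl; ring.
  intros; unfold Fa; rewrite Kf_add, velt_add, dot_addl; ring.
Qed.
Lemma Bf_sc1 c u v : Bf (vnscale c u) v = c * Bf u v.
Proof.
  unfold Bf. rewrite (ipS_lin J HJ1 lumped _ (Fa u v) (Fa u v) c 0), (pint_lin J HJ1 (Fb (vnscale c u) v) (Fb u v) (Fb u v) c 0);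
  try (intros; apply Fa_P3); try (intros; apply Fb_P3).
  ring. intros; unfold Fb; rewrite vdlt_sc, dot_scl; ring.
  intros; unfold Fa; rewrite Kf_sc, velt_sc, dot_scl; ring.
Qed.
Lemma Bf_add2 u w v : Bf u (vnadd w v) = Bf u w + Bf u v.
Proof.
  unfold Bf. rewrite (ipS_lin J HJ1 lumped _ (Fa u w) (Fa u v) 1 1), (pint_lin J HJ1 (Fb u (vnadd w v)) (Fb u w) (Fb u v) 1 1);
  try (intros; apply Fa_P3); try (intros; apply Fb_P3).
  ring. intros; unfold Fb; rewrite vdlt_add, dot_addr; ring.
  intros; unfold Fa; rewrite velt_add, dot_addr; ring.
Qed.
Lemma Bf_sc2 c u v : Bf u (vnscale c v) = c * Bf u v.
Proof.
  unfold Bf. rewrite (ipS_lin J HJ1 lumped _ (Fa u v) (Fa u v) c 0), (pint_lin J HJ1 (Fb u (vnscale c v)) (Fb u v) (Fb u v) c 0);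
  try (intros; apply Fa_P3); try (intros; apply Fb_P3).
  ring. intros; unfold Fb; rewrite vdlt_sc, dot_scr; ring.
  intros; unfold Fa; rewrite velt_sc, dot_scr; ring.
Qed.

Lemma bt_add u w : bt (vnadd u w) = bt u + bt w.
Proof. unfold bt, bterm, vnadd, vadd. destruct periodic; [ring|].
  destruct (labp lab0 lab1 false), (labp lab0 lab1 true); simpl; ring. Qed.
Lemma bt_sc c u : bt (vnscale c u) = c * bt u.
Proof. unfold bt, bterm, vnscale, vscale. destruct periodic; [ring|].
  destruct (labp lab0 lab1 false), (labp lab0 lab1 true); simpl; ring. Qed.
Lemma Lf_add u w : Lf (vnadd u w) = Lf u + Lf w.
Proof.
  unfold Lf. rewrite bt_add, (pint_lin J HJ1 (Fc (vnadd u w)) (Fc u) (Fc w) 1 1), (pint_lin J HJ1 (Fb X (vnadd u w)) (Fb X u) (Fb X w) 1 1);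
  try (intros; apply Fc_P3); try (intros; apply Fb_P3).
  ring. intros; unfold Fb; rewrite vdlt_add, dot_addr; ring.
  intros; unfold Fc, vnadd, c1, vadd, elt; simpl; unfold Rdiv; ring.
Qed.
Lemma Lf_sc c u : Lf (vnscale c u) = c * Lf u.
Proof.
  unfold Lf. rewrite bt_sc, (pint_lin J HJ1 (Fc (vnscale c u)) (Fc u) (Fc u) c 0), (pint_lin J HJ1 (Fb X (vnscale c u)) (Fb X u) (Fb X u) c 0);
  try (intros; apply Fc_P3); try (intros; apply Fb_P3).
  ring. intros; unfold Fb; rewrite vdlt_sc, dot_scr; ring.
  intros; unfold Fc, vnscale, c1, vscale, elt; simpl; unfold Rdiv; ring.
Qed.

Definition nul (v : vnodal) := forall k, (k <= J)%nat -> v k = (0,0).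

Lemma nul_velt v j x : nul v -> (1 <= j <= J)%nat -> velt J v j x = (0,0).
Proof. intros Hn Hj. rewrite (velt_ext J v vnzero) by (apply Hn; lia). unfold velt, elt, vnzero, c1, c2; simpl.
  apply vec_eq; simpl; unfold Rdiv; ring. Qed.
Lemma nul_vdlt v j : nul v -> (1 <= j <= J)%nat -> vdlt J v j = (0,0).
Proof. intros Hn Hj. rewrite (vdlt_ext J v vnzero) by (apply Hn; lia). unfold vdlt, dlt, vnzero, c1, c2; simpl.
  apply vec_eq; simpl; unfold Rdiv; ring. Qed.

Lemma Bf_nul u v : nul v -> Bf u v = 0.
Proof.
  intro Hn. unfold Bf.
  assert (E1 : ipS J lumped (Fa u v) = 0).
  { destruct lumped; simpl; [apply lint_zero|apply (pint_zero J HJ1)]; intros j Hj x; unfold Fa;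
    rewrite (nul_velt v j x Hn Hj), dot_0r; ring. }
  assert (E2 : pint J (Fb u v) = 0).
  { apply (pint_zero J HJ1). intros j Hj x; unfold Fb. rewrite (nul_vdlt v j Hn Hj), dot_0r; ring. }
  lra.
Qed.
Lemma Lf_nul v : nul v -> Lf v = 0.
Proof.
  intro Hn. unfold Lf. rewrite (pint_zero J HJ1 (Fb X v)), (pint_zero J HJ1 (Fc v)).
  - assert (bt v = 0).
    { unfold bt, bterm. destruct periodic; [ring|]. simpl. rewrite (Hn 0%nat), (Hn J) by lia.
      destruct lab0, lab1; simpl; ring. }
    lra.
  - intros j Hj x; unfold Fc. rewrite (elt_ext J (c1 v) (c1 vnzero)) by (unfold c1; rewrite Hn by lia; auto).
    unfold elt, c1, vnzero; simpl; unfold Rdiv; ring.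
  - intros j Hj x; unfold Fb. rewrite (nul_vdlt v j Hn Hj), dot_0r; ring.
Qed.


Lemma vdlt0_step u j : (1 <= j)%nat -> vdlt J u j = (0,0) -> u j = u (j-1)%nat.
Proof.
  intros Hj E. unfold vdlt, dlt, c1, c2 in E. injection E as E1 E2. pose proof (h_pos J HJ1).
  assert (Hi : / h J <> 0) by (apply Rinv_neq_0_compat; lra).
  unfold Rdiv in E1, E2. apply Rmult_integral in E1. apply Rmult_integral in E2.
  apply vec_eq; lra.
Qed.

Lemma Fa_a u j : (1 <= j <= J)%nat -> 0 <= Fa u u j (q J (j-1)).
Proof. intro Hj. unfold Fa. rewrite elt_a, !velt_a. unfold c1. pose proof (nrm_pos j Hj). pose proof (Kf_nn u (j-1)).
  pose proof (xnode_nn (j-1) ltac:(lia)). apply Rmult_le_pos; [apply Rmult_le_pos|]; lra. Qed.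
Lemma Fa_b u j : (1 <= j <= J)%nat -> 0 <= Fa u u j (q J j).
Proof. intro Hj. unfold Fa. rewrite elt_b, !velt_b by lia. unfold c1. pose proof (nrm_pos j Hj). pose proof (Kf_nn u j).
  pose proof (xnode_nn j ltac:(lia)). apply Rmult_le_pos; [apply Rmult_le_pos|]; lra. Qed.
Lemma Fa_x u j x : lumped = false -> (1 <= j <= J)%nat -> 0 <= elt J (c1 X) j x -> 0 <= Fa u u j x.
Proof. intros Hl Hj Hx. unfold Fa. rewrite Kf_exact, velt_sc, dot_scl by auto. pose proof (nrm_pos j Hj).
  pose proof (dot_nn (velt J u j x)). assert (0 < / dt) by (apply Rinv_0_lt_compat; auto).
  apply Rmult_le_pos; [apply Rmult_le_pos|]; try lra. apply Rmult_le_pos; lra. Qed.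
Lemma Fb_x u j x : (1 <= j <= J)%nat -> 0 <= elt J (c1 X) j x -> 0 <= Fb u u j x.
Proof. intros Hj Hx. unfold Fb. pose proof (nrm_pos j Hj). pose proof (dot_nn (vdlt J u j)).
  assert (0 < / nrm J X j) by (apply Rinv_0_lt_compat; auto).
  apply Rmult_le_pos; [apply Rmult_le_pos|]; lra. Qed.

Lemma Fa_nn u : 0 <= ipS J lumped (Fa u u) /\
  (ipS J lumped (Fa u u) = 0 -> forall j, (1 <= j <= J)%nat -> Fa u u j (q J (j-1)) = 0 /\ Fa u u j (q J j) = 0).
Proof.
  destruct lumped eqn:El; simpl.
  - split. apply (lint_nonneg J HJ1). intros; split; [apply Fa_a|apply Fa_b]; auto.
    intros H0. apply (lint_zero_pts J HJ1); auto. intros; split; [apply Fa_a|apply Fa_b]; auto.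
  - assert (Hp : forall j, (1 <= j <= J)%nat -> 0 <= Fa u u j (q J (j-1)) /\ 0 <= Fa u u j (mid J j) /\ 0 <= Fa u u j (q J j)).
    { intros j Hj. split; [apply Fa_a; auto|split; [|apply Fa_b; auto]]. apply Fa_x; auto. left; apply xmid_pos; auto. }
    split. apply (pint_nonneg J HJ1); auto. intros; apply Fa_P3.
    intros H0 j Hj. destruct (pint_zero_pts J HJ1 (Fa u u) ltac:(intros; apply Fa_P3) Hp H0 j Hj) as (?&?&?). auto.
Qed.
Lemma Fb_nn u : 0 <= pint J (Fb u u) /\
  (pint J (Fb u u) = 0 -> forall j, (1 <= j <= J)%nat -> Fb u u j (mid J j) = 0).
Proof.
  assert (Hp : forall j, (1 <= j <= J)%nat -> 0 <= Fb u u j (q J (j-1)) /\ 0 <= Fb u u j (mid J j) /\ 0 <= Fb u u j (q J j)).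
  { intros j Hj. split; [|split]; apply Fb_x; auto. apply x1a_nn; auto. left; apply xmid_pos; auto. apply x1b_nn; auto. }
  split. apply (pint_nonneg J HJ1); auto. intros; apply Fb_P3.
  intros H0 j Hj. destruct (pint_zero_pts J HJ1 (Fb u u) ltac:(intros; apply Fb_P3) Hp H0 j Hj) as (?&?&?). auto.
Qed.

Lemma Bf_coer u : Bf u u = 0 -> nul u.
Proof.
  intro H. unfold Bf in H. destruct (Fa_nn u) as [Ha Ha0]. destruct (Fb_nn u) as [Hb Hb0].
  assert (Ea : ipS J lumped (Fa u u) = 0) by lra. assert (Eb : pint J (Fb u u) = 0) by lra.
  assert (Hstep : forall j, (1 <= j <= J)%nat -> u j = u (j-1)%nat).
  { intros j Hj. apply vdlt0_step; [lia|]. apply dot_z.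
    pose proof (Hb0 Eb j Hj) as E. unfold Fb in E. pose proof (xmid_pos j Hj). pose proof (nrm_pos j Hj).
    assert (/ nrm J X j <> 0) by (apply Rinv_neq_0_compat; lra).
    apply Rmult_integral in E. destruct E as [E|E]; [|lra]. apply Rmult_integral in E. destruct E; [lra|auto]. }
  assert (H1 : u 1%nat = (0,0)).
  { destruct (Ha0 Ea 1%nat ltac:(lia)) as [_ E]. unfold Fa in E. rewrite elt_b, !velt_b in E by lia. unfold c1 in E.
    unfold Kf in E. rewrite msk_1, Bool.andb_false_r in E. rewrite dot_scl in E.
    pose proof (xnode_pos 1 ltac:(lia) msk_1). pose proof (nrm_pos 1 ltac:(lia)).
    assert (/ dt <> 0) by (apply Rinv_neq_0_compat; lra).
    apply dot_z. apply Rmult_integral in E. destruct E as [E|E]; [|lra]. apply Rmult_integral in E. destruct E as [E|E]; [lra|].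
    apply Rmult_integral in E. destruct E; [lra|auto]. }
  intro k. induction k as [|k IH]; intro Hk.
  - rewrite <- H1. symmetry. apply (Hstep 1%nat). lia.
  - rewrite (Hstep (S k)) by lia. replace (S k - 1)%nat with k by lia. apply IH. lia.
Qed.


Notation VD := (inVD J periodic lab0 lab1).

Lemma VD_add u w : VD u -> VD w -> VD (vnadd u w).
Proof.
  intros [[Hu1 Hu2] Hu3] [[Hw1 Hw2] Hw3]. unfold vnadd, vadd. split; [split|].
  - intro Hp. rewrite (Hu1 Hp), (Hw1 Hp). auto.
  - intros p Hp Hl. simpl. rewrite (Hu2 p Hp Hl), (Hw2 p Hp Hl). ring.
  - intros p Hp. destruct (Hu3 p Hp) as (a1&a2&a3). destruct (Hw3 p Hp) as (b1&b2&b3).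
    split;[|split]; intro Hl; simpl.
    + rewrite (a1 Hl), (b1 Hl); ring.
    + rewrite (a2 Hl), (b2 Hl); ring.
    + rewrite (a3 Hl), (b3 Hl). apply vec_eq; simpl; ring.
Qed.
Lemma VD_sc c u : VD u -> VD (vnscale c u).
Proof.
  intros [[Hu1 Hu2] Hu3]. unfold vnscale, vscale. split; [split|].
  - intro Hp. rewrite (Hu1 Hp). auto.
  - intros p Hp Hl. simpl. rewrite (Hu2 p Hp Hl). ring.
  - intros p Hp. destruct (Hu3 p Hp) as (a1&a2&a3).
    split;[|split]; intro Hl; simpl.
    + rewrite (a1 Hl); ring.
    + rewrite (a2 Hl); ring.
    + rewrite (a3 Hl). apply vec_eq; simpl; ring.
Qed.
Lemma VD_zero : VD vnzero.
Proof. unfold vnzero. split; [split|]. intro; reflexivity. intros; reflexivity. intros; repeat split; intros; reflexivity. Qed.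
Lemma VD_comb l c : (forall v, In v l -> VD v) -> VD (comb l c).
Proof.
  revert c. induction l as [|e l IH]; intros c H; simpl. apply VD_zero.
  apply VD_add. apply VD_sc. apply H; simpl; auto. apply IH. intros; apply H; simpl; auto.
Qed.

Definition cz (lab : bclab) (a : vec) : vec :=
  match lab with BD => (0,0) | B0 | B1 => (0, snd a) | B2 => (fst a, 0) end.
Definition Pj (v : vnodal) : vnodal := fun k =>
  if periodic then (if Nat.eqb k J then v 0%nat else v k)
  else (if Nat.eqb k 0 then cz lab0 (v 0%nat) else if Nat.eqb k J then cz lab1 (v J) else v k).

Lemma J0 : Nat.eqb J 0 = false.
Proof. apply Nat.eqb_neq. lia. Qed.
Lemma J0' : Nat.eqb 0 J = false.
Proof. apply Nat.eqb_neq. lia. Qed.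

Lemma Pj_VD v : VD (Pj v).
Proof.
  unfold Pj. split; [split|].
  - intro Hp. rewrite Hp, Nat.eqb_refl, J0'. auto.
  - intros p Hp Hl. rewrite Hp. destruct p; simpl in *; rewrite ?J0, ?Nat.eqb_refl; rewrite Hl; simpl; auto.
  - intros p Hp. rewrite Hp. destruct p; simpl in *; rewrite ?J0, ?Nat.eqb_refl; repeat split; intro Hl; rewrite Hl; simpl; auto.
Qed.
Lemma Pj_id v k : VD v -> (k <= J)%nat -> Pj v k = v k.
Proof.
  intros [[H1 H2] H3] Hk. unfold Pj. destruct periodic eqn:Ep.
  - destruct (Nat.eqb_spec k J) as [->|]; auto. symmetry. apply H1; auto.
  - destruct (Nat.eqb_spec k 0) as [->|].
    + specialize (H2 false eq_refl). specialize (H3 false eq_refl). simpl in *. destruct H3 as (a1&a2&a3).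
      destruct lab0; unfold cz.
      * rewrite a3; auto.
      * rewrite <- (H2 eq_refl). destruct (v 0%nat); auto.
      * rewrite <- (a1 eq_refl). destruct (v 0%nat); auto.
      * rewrite <- (a2 eq_refl). destruct (v 0%nat); auto.
    + destruct (Nat.eqb_spec k J) as [->|]; auto.
      specialize (H2 true eq_refl). specialize (H3 true eq_refl). simpl in *. destruct H3 as (a1&a2&a3).
      destruct lab1; unfold cz.
      * rewrite a3; auto.
      * rewrite <- (H2 eq_refl). destruct (v J); auto.
      * rewrite <- (a1 eq_refl). destruct (v J); auto.
      * rewrite <- (a2 eq_refl). destruct (v J); auto.
Qed.
Lemma cz_add l a b : cz l (vadd a b) = vadd (cz l a) (cz l b).
Proof. destruct l; unfold cz, vadd; simpl; apply vec_eq; simpl; ring. Qed.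
Lemma cz_sc l c a : cz l (vscale c a) = vscale c (cz l a).
Proof. destruct l; unfold cz, vscale; simpl; apply vec_eq; simpl; ring. Qed.
Lemma Pj_add u w : Pj (vnadd u w) = vnadd (Pj u) (Pj w).
Proof. apply functional_extensionality; intro k. unfold Pj, vnadd.
  destruct periodic, (k =? J)%nat, (k =? 0)%nat; rewrite ?cz_add; auto. Qed.
Lemma Pj_sc c u : Pj (vnscale c u) = vnscale c (Pj u).
Proof. apply functional_extensionality; intro k. unfold Pj, vnscale.
  destruct periodic, (k =? J)%nat, (k =? 0)%nat; rewrite ?cz_sc; auto. Qed.

Definition trunc (n : nat) (v : vnodal) : vnodal := fun k => if Nat.ltb k n then v k else (0,0).
Lemma trunc_lt n v k : (k < n)%nat -> trunc n v k = v k.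
Proof. intro H. unfold trunc. apply Nat.ltb_lt in H. rewrite H. auto. Qed.
Lemma Pj_trunc v k : (k <= J)%nat -> Pj (trunc (S J) v) k = Pj v k.
Proof. intro Hk. unfold Pj. rewrite !trunc_lt by lia. auto. Qed.

Definition ue1 (n : nat) : vnodal := fun k => if Nat.eqb k n then (1,0) else (0,0).
Definition ue2 (n : nat) : vnodal := fun k => if Nat.eqb k n then (0,1) else (0,0).
Fixpoint basisL (n : nat) : list vnodal :=
  match n with O => nil | S n => Pj (ue1 n) :: Pj (ue2 n) :: basisL n end.
Fixpoint coefs (v : vnodal) (n : nat) (i : nat) : R :=
  match n with
  | O => 0
  | S n => match i with O => fst (v n) | S O => snd (v n) | S (S i) => coefs v n i end
  end.

Lemma trunc_S n v : trunc (S n) v = vnadd (vnscale (fst (v n)) (ue1 n)) (vnadd (vnscale (snd (v n)) (ue2 n)) (trunc n v)).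
Proof.
  apply functional_extensionality; intro k. unfold trunc, vnadd, vnscale, ue1, ue2.
  destruct (Compare_dec.lt_eq_lt_dec k n) as [[Hlt| ->]|Hgt].
  - replace (k <? S n)%nat with true by (symmetry; apply Nat.ltb_lt; lia).
    replace (k <? n)%nat with true by (symmetry; apply Nat.ltb_lt; lia).
    replace (k =? n)%nat with false by (symmetry; apply Nat.eqb_neq; lia).
    unfold vadd, vscale; apply vec_eq; simpl; ring.
  - replace (n <? S n)%nat with true by (symmetry; apply Nat.ltb_lt; lia).
    replace (n <? n)%nat with false by (symmetry; apply Nat.ltb_ge; lia).
    rewrite Nat.eqb_refl. unfold vadd, vscale; apply vec_eq; simpl; ring.
  - replace (k <? S n)%nat with false by (symmetry; apply Nat.ltb_ge; lia).
    replace (k <? n)%nat with false by (symmetry; apply Nat.ltb_ge; lia).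
    replace (k =? n)%nat with false by (symmetry; apply Nat.eqb_neq; lia).
    unfold vadd, vscale; apply vec_eq; simpl; ring.
Qed.

Lemma comb_basis v n : comb (basisL n) (coefs v n) = Pj (trunc n v).
Proof.
  induction n as [|n IH].
  - simpl. apply functional_extensionality; intro k. unfold Pj, trunc, vnzero, cz. simpl.
    destruct periodic, (k =? J)%nat, (k =? 0)%nat, lab0, lab1; auto.
  - rewrite trunc_S, !Pj_add, !Pj_sc, <- IH. simpl. reflexivity.
Qed.

Lemma basis_VD n : forall v, In v (basisL n) -> VD v.
Proof. induction n; simpl; intros v H; [destruct H|]. destruct H as [<-|[<-|H]]; auto; apply Pj_VD. Qed.

Lemma comb_rep v : VD v -> forall k, (k <= J)%nat -> comb (basisL (S J)) (coefs v (S J)) k = v k.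
Proof. intros Hv k Hk. rewrite comb_basis, Pj_trunc, Pj_id; auto. Qed.


Lemma prod0 a b c : 0 < a -> 0 < c -> a * b * c = 0 -> b = 0.
Proof. intros Ha Hc E. apply Rmult_integral in E. destruct E as [E|E]; [|lra].
  apply Rmult_integral in E. destruct E; [lra|auto]. Qed.

Lemma exist_sol : exists dX, VD dX /\ forall eta, VD eta -> Bf dX eta = Lf eta.
Proof.
  destruct (LM Bf nul Bf_add1 Bf_sc1 Bf_add2 Bf_sc2 Bf_nul Bf_coer (basisL (S J)) Lf Lf_add Lf_sc Lf_nul) as [c Hc].
  exists (comb (basisL (S J)) c). split. apply VD_comb, basis_VD.
  intros eta Heta. set (u := comb (basisL (S J)) c). set (cc := coefs eta (S J)).
  set (r := vnadd eta (vnscale (-1) (comb (basisL (S J)) cc))).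
  assert (Hr : nul r).
  { intros k Hk. unfold r, vnadd, vnscale. unfold cc. rewrite comb_rep by auto. unfold vadd, vscale. apply vec_eq; simpl; ring. }
  assert (E : eta = vnadd (comb (basisL (S J)) cc) r).
  { apply functional_extensionality; intro k. unfold r, vnadd, vnscale, vadd, vscale. apply vec_eq; simpl; ring. }
  rewrite E, Bf_add2, Lf_add, (Bf_nul _ r Hr), (Lf_nul r Hr).
  rewrite (comb_ext2 Bf Bf_add2 Bf_sc2 Lf u Lf_add Lf_sc (basisL (S J)) Hc cc). ring.
Qed.

Lemma eq2_lhs dX K eta : (forall k, (k <= J)%nat -> K k = Kf dX k) ->
  ipS J lumped (fun j x => elt J (c1 X) j x * dot (velt J K j x) (velt J eta j x) * nrm J X j)
  + pint J (fun j x => elt J (c1 eta) j x * nrm J X j)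
  + pint J (fun j x => elt J (c1 X) j x * dot (vdlt J (fun j => vadd (X j) (dX j)) j) (vdlt J eta j) * / nrm J X j)
  = Bf dX eta + pint J (Fc eta) + pint J (Fb X eta).
Proof.
  intro HK. unfold Bf.
  rewrite (ipS_ext J lumped _ (Fa dX eta)).
  2: lia.
  2: { intros j Hj x. unfold Fa. rewrite (velt_ext J K (Kf dX)) by (apply HK; lia). auto. }
  rewrite (pint_lin J HJ1 (fun j x => elt J (c1 X) j x * dot (vdlt J (fun j => vadd (X j) (dX j)) j) (vdlt J eta j) * / nrm J X j) (Fb X eta) (Fb dX eta) 1 1).
  all: try (intros; apply Fb_P3).
  - unfold Fc. ring.
  - intros j x. unfold Fb. change (fun j0 => vadd (X j0) (dX j0)) with (vnadd X dX). rewrite vdlt_add, dot_addl. ring.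
Qed.

Lemma node_eq dX k c : lumped = true -> fst (X k) * dot (vscale (/dt) (vsub (vadd (X k) (dX k)) (X k))) c = fst (X k) * dot (Kf dX k) c.
Proof. intro El. unfold Kf. rewrite El. simpl. destruct (msk k) eqn:Em; simpl.
  rewrite xnode_msk by auto. ring. unfold dot, vscale, vsub, vadd; simpl; ring. Qed.

Lemma eq1_ex dX chi :
  ipS J lumped (fun j x => elt J (c1 X) j x *
        dot (vscale (/ dt) (vsub (velt J (fun j => vadd (X j) (dX j)) j x) (velt J X j x))) (velt J chi j x) * nrm J X j)
  = ipS J lumped (fun j x => elt J (c1 X) j x * dot (velt J (Kf dX) j x) (velt J chi j x) * nrm J X j).
Proof.
  destruct lumped eqn:El; simpl.
  - apply lint_ext. intros j Hj. split.
    + rewrite elt_b, !velt_b by lia. unfold c1. rewrite node_eq by auto. auto.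
    + rewrite elt_a, !velt_a. unfold c1. rewrite node_eq by auto. auto.
  - apply pint_ext. intros j Hj x. rewrite Kf_exact by auto. f_equal. f_equal. f_equal.
    unfold velt, vsub, vscale, vnscale, elt, c1, c2; simpl. apply vec_eq; simpl; unfold Rdiv; ring.
Qed.

Lemma Kf_Ws dX : VD dX -> inWs2 J periodic lab0 lab1 lumped (Kf dX).
Proof.
  intros [[Hp _] _]. unfold inWs2, inWs, Kf, c1, c2. destruct lumped eqn:El; simpl.
  - unfold inW0, inVh_s. split; split.
    + intro Hper. rewrite !msk_per by auto. simpl. rewrite Hp by auto. auto.
    + intros p Hper Hl. rewrite msk_bnode by auto. auto.
    + intro Hper. rewrite !msk_per by auto. simpl. rewrite Hp by auto. auto.
    + intros p Hper Hl. rewrite msk_bnode by auto. auto.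
  - unfold inVh_s. split; intro Hper; rewrite Hp by auto; auto.
Qed.


Lemma half0 (b : vec) : vscale (/2) (vadd (0,0) b) = (0,0) -> b = (0,0).
Proof. destruct b as [b1 b2]. unfold vscale, vadd; simpl. intro E. injection E as E1 E2. apply vec_eq; simpl; lra. Qed.
Lemma half0' (a : vec) : vscale (/2) (vadd a (0,0)) = (0,0) -> a = (0,0).
Proof. destruct a as [b1 b2]. unfold vscale, vadd; simpl. intro E. injection E as E1 E2. apply vec_eq; simpl; lra. Qed.

Lemma ptid dX' K' chi j x :
  elt J (c1 X) j x * dot (velt J (fun k => vsub (vscale (/dt) (dX' k)) (K' k)) j x) (velt J chi j x) * nrm J X j
  = 1 * (elt J (c1 X) j x * dot (vscale (/ dt) (vsub (velt J (fun j => vadd (X j) (dX' j)) j x) (velt J X j x))) (velt J chi j x) * nrm J X j)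
    + (-1) * (elt J (c1 X) j x * dot (velt J K' j x) (velt J chi j x) * nrm J X j).
Proof. unfold dot, velt, vscale, vsub, vadd, elt, c1, c2; simpl. unfold Rdiv. ring. Qed.

Lemma Kdet dX' K' : scheme J periodic lab0 lab1 rho0 rho1 lumped dt X dX' K' ->
  forall k, (k <= J)%nat -> K' k = Kf dX' k.
Proof.
  intros (HV & HW & H1 & _).
  set (D := fun k => vsub (vscale (/dt) (dX' k)) (K' k)).
  set (chi := fun k => if lumped && msk k then (0,0) else D k).
  assert (HKp : periodic = true -> K' J = K' 0%nat).
  { intro Hp. unfold inWs2, inWs in HW. destruct lumped; destruct HW as [Ha Hb].
    - destruct Ha as [Ha _]. destruct Hb as [Hb _]. specialize (Ha Hp). specialize (Hb Hp). unfold c1, c2 in *. apply vec_eq; auto.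
    - specialize (Ha Hp). specialize (Hb Hp). unfold c1, c2 in *. apply vec_eq; auto. }
  assert (HDp : periodic = true -> D J = D 0%nat).
  { intro Hp. unfold D. rewrite HKp by auto. destruct HV as [[HV _] _]. rewrite HV by auto. auto. }
  assert (Hchip : periodic = true -> chi J = chi 0%nat).
  { intro Hp. unfold chi. rewrite !msk_per by auto. rewrite !Bool.andb_false_r. apply HDp; auto. }
  assert (Hchib : forall p, lumped = true -> periodic = false -> labp lab0 lab1 p = B0 -> chi (bnode J p) = (0,0)).
  { intros p El Hp Hl. unfold chi. rewrite El, msk_bnode by auto. auto. }
  assert (Hchi : inWs2 J periodic lab0 lab1 lumped chi).
  { unfold inWs2, inWs, c1, c2. destruct lumped eqn:El.
    - unfold inW0, inVh_s. split; split.
      + intro Hper. rewrite Hchip by auto. auto.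
      + intros p Hper Hl. rewrite Hchib by auto. auto.
      + intro Hper. rewrite Hchip by auto. auto.
      + intros p Hper Hl. rewrite Hchib by auto. auto.
    - unfold inVh_s. split; intro Hper; rewrite Hchip by auto; auto. }
  assert (HG : ipS J lumped (fun j x => elt J (c1 X) j x * dot (velt J D j x) (velt J chi j x) * nrm J X j) = 0).
  { rewrite (ipS_lin J HJ1 lumped _
      (fun j x => elt J (c1 X) j x * dot (vscale (/ dt) (vsub (velt J (fun j => vadd (X j) (dX' j)) j x) (velt J X j x))) (velt J chi j x) * nrm J X j)
      (fun j x => elt J (c1 X) j x * dot (velt J K' j x) (velt J chi j x) * nrm J X j) 1 (-1)).
    - rewrite (H1 chi Hchi). ring.
    - intro j. unfold dot, velt, vscale, vsub. simpl. pd.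
    - intro j. unfold dot, velt. simpl. pd.
    - intros j x. apply ptid. }
  assert (HDK : forall k, D k = (0,0) -> K' k = Kf dX' k).
  { intros k Hk. unfold D in Hk. unfold Kf. injection Hk as Hk1 Hk2.
    destruct (lumped && msk k) eqn:E; [| apply vec_eq; unfold vscale in *; simpl in *; lra].
    apply andb_prop in E. destruct E as [El Em]. apply msk_spec in Em. destruct Em as [Hp [p [-> Hl]]].
    unfold inWs2, inWs in HW. rewrite El in HW. destruct HW as [[_ Ha] [_ Hb]]. unfold c1, c2 in *.
    apply vec_eq; simpl; auto. }
  destruct lumped eqn:El; simpl in HG.
  -
    assert (Hnn : forall k, (k <= J)%nat -> 0 <= dot (D k) (chi k)).
    { intros k Hk. unfold chi. rewrite ?El. simpl. destruct (msk k). rewrite dot_0r; lra. apply dot_nn. }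
    assert (Hp : forall j, (1 <= j <= J)%nat ->
      0 <= (fun j x => elt J (c1 X) j x * dot (velt J D j x) (velt J chi j x) * nrm J X j) j (q J (j-1)) /\
      0 <= (fun j x => elt J (c1 X) j x * dot (velt J D j x) (velt J chi j x) * nrm J X j) j (q J j)).
    { intros j Hj. simpl. rewrite elt_a, elt_b, !velt_a, !velt_b by lia. unfold c1.
      pose proof (nrm_pos j Hj). pose proof (xnode_nn j ltac:(lia)). pose proof (xnode_nn (j-1) ltac:(lia)).
      pose proof (Hnn j ltac:(lia)). pose proof (Hnn (j-1)%nat ltac:(lia)).
      split; apply Rmult_le_pos; try apply Rmult_le_pos; lra. }
    pose proof (lint_zero_pts J HJ1 _ Hp HG) as HZ.
    intros k Hk. destruct (msk k) eqn:Em.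
    + unfold Kf. rewrite El, Em. simpl.
      apply msk_spec in Em. destruct Em as [Hper [p [-> Hl]]].
      unfold inWs2, inWs in HW. destruct HW as [[_ Ha] [_ Hb]]. unfold c1, c2 in *.
      apply vec_eq; simpl; auto.
    + apply HDK. apply dot_z.
      destruct k as [|k].
      * pose proof (proj1 (HZ 1%nat ltac:(lia))) as E. simpl in E.
        change (q J 0) with (q J (1-1)) in E. rewrite elt_a, !velt_a in E. unfold c1 in E. simpl in E.
        unfold chi in E. rewrite ?El, Em in E. simpl in E.
        exact (prod0 _ _ _ (xnode_pos 0 ltac:(lia) Em) (nrm_pos 1 ltac:(lia)) E).
      * pose proof (proj2 (HZ (S k) ltac:(lia))) as E. simpl in E.
        rewrite elt_b, !velt_b in E by lia. unfold c1 in E.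
        unfold chi in E. rewrite ?El, Em in E. simpl in E.
        exact (prod0 _ _ _ (xnode_pos (S k) Hk Em) (nrm_pos (S k) ltac:(lia)) E).
  -
    assert (Hchi' : chi = D) by (unfold chi; rewrite ?El; reflexivity).
    rewrite Hchi' in HG.
    assert (Hp : forall j, (1 <= j <= J)%nat ->
      0 <= (fun j x => elt J (c1 X) j x * dot (velt J D j x) (velt J D j x) * nrm J X j) j (q J (j-1)) /\
      0 <= (fun j x => elt J (c1 X) j x * dot (velt J D j x) (velt J D j x) * nrm J X j) j (mid J j) /\
      0 <= (fun j x => elt J (c1 X) j x * dot (velt J D j x) (velt J D j x) * nrm J X j) j (q J j)).
    { intros j Hj. simpl. pose proof (nrm_pos j Hj). pose proof (x1a_nn j Hj). pose proof (x1b_nn j Hj). pose proof (xmid_pos j Hj).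
      pose proof (dot_nn (velt J D j (q J (j-1)))). pose proof (dot_nn (velt J D j (mid J j))). pose proof (dot_nn (velt J D j (q J j))).
      split; [|split]; apply Rmult_le_pos; try apply Rmult_le_pos; lra. }
    assert (HP3 : forall j, P3 ((fun j x => elt J (c1 X) j x * dot (velt J D j x) (velt J D j x) * nrm J X j) j)).
    { intro j. unfold dot, velt. simpl. pd. }
    pose proof (pint_zero_pts J HJ1 _ HP3 Hp HG) as HZ.
    assert (HE : forall j, (1 <= j <= J)%nat -> D (j-1)%nat = (0,0) /\ D j = (0,0)).
    { intros j Hj. destruct (HZ j Hj) as (Za & Zm & Zb). simpl in Za, Zm, Zb.
      rewrite elt_a, velt_a in Za. rewrite elt_b, velt_b in Zb by lia. unfold c1 in Za, Zb.
      pose proof (prod0 _ _ _ (xmid_pos j Hj) (nrm_pos j Hj) Zm) as Zm'. apply dot_z in Zm'.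
      rewrite velt_m in Zm' by lia.
      destruct (msk_adj j Hj) as [Em|Em].
      - pose proof (prod0 _ _ _ (xnode_pos (j-1) ltac:(lia) Em) (nrm_pos j Hj) Za) as Z. apply dot_z in Z.
        split; auto. rewrite Z in Zm'. apply (half0 _ Zm').
      - pose proof (prod0 _ _ _ (xnode_pos j ltac:(lia) Em) (nrm_pos j Hj) Zb) as Z. apply dot_z in Z.
        split; auto. rewrite Z in Zm'. apply (half0' _ Zm'). }
    intros k Hk. apply HDK. destruct k as [|k].
    + exact (proj1 (HE 1%nat ltac:(lia))).
    + exact (proj2 (HE (S k) ltac:(lia))).
Qed.


Lemma main : exists dX K : vnodal,
    scheme J periodic lab0 lab1 rho0 rho1 lumped dt X dX K /\
    forall dX' K' : vnodal,
      scheme J periodic lab0 lab1 rho0 rho1 lumped dt X dX' K' ->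
      forall j : nat, (j <= J)%nat -> dX' j = dX j /\ K' j = K j.
Proof.
  destruct exist_sol as [dX [HdX HB]].
  exists dX, (Kf dX). split.
  - unfold scheme. split; [exact HdX|]. split; [apply Kf_Ws; auto|]. split.
    + intros chi _. apply eq1_ex.
    + intros eta Heta. rewrite (eq2_lhs dX (Kf dX) eta) by auto. rewrite HB by auto. unfold Lf, bt. ring.
  - intros dX' K' Hs j Hj.
    pose proof (Kdet dX' K' Hs) as HK.
    destruct Hs as (HV & _ & _ & H2).
    assert (HB' : forall eta, VD eta -> Bf dX' eta = Lf eta).
    { intros eta Heta. specialize (H2 eta Heta). rewrite (eq2_lhs dX' K' eta HK) in H2. unfold Lf, bt. lra. }
    set (e := vnadd dX' (vnscale (-1) dX)).
    assert (He : VD e) by (apply VD_add; auto; apply VD_sc; auto).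
    assert (Hee : Bf e e = 0) by (unfold e at 1; rewrite Bf_add1, Bf_sc1, HB', HB by auto; ring).
    pose proof (Bf_coer e Hee j Hj) as Hz. unfold e, vnadd, vnscale, vadd, vscale in Hz.
    assert (Ej : dX' j = dX j).
    { destruct (dX' j), (dX j). simpl in Hz. injection Hz as Z1 Z2. apply vec_eq; simpl; lra. }
    split; auto. rewrite HK by auto. unfold Kf. rewrite Ej. auto.
Qed.

End Main.

Theorem lemma4p4 (J : nat) (periodic : bool) (lab0 lab1 : bclab) (rho0 rho1 : R)
  (lumped : bool) (X : vnodal) (dt : R) :
  (3 <= J)%nat -> Rabs rho0 <= 1 -> Rabs rho1 <= 1 ->
  inV0 J periodic lab0 lab1 X ->
  assumpA J periodic lab0 lab1 X ->
  0 < dt ->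
  exists dX K : vnodal,
    scheme J periodic lab0 lab1 rho0 rho1 lumped dt X dX K /\
    forall dX' K' : vnodal,
      scheme J periodic lab0 lab1 rho0 rho1 lumped dt X dX' K' ->
      forall j : nat, (j <= J)%nat -> dX' j = dX j /\ K' j = K j.
Proof. intros HJ _ _ HX0 HA Hdt. apply main; assumption. Qed.
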